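(* Under the hypotheses and notation of the setting below (anonymous polymatrix game, arbitrary joint action history $(a_l)_{0\le l\le k}$, beliefs $\hat\pi$ and aggregate beliefs $\hat\mu$ built with the same step sizes), for every $k\ge0$ and agent $i$, the maps $a^i\mapsto\bar R^i(a^i,\hat\mu^i_k)$ and $a^i\mapsto R^i(a^i,\hat\pi^{-i}_k)$ have the same set of maximizers over $\mathbb{A}$. Consequently, any deterministic rule that maps each agent's vector of expected rewards $(\cdot)_{a^i\in\mathbb{A}}$ to an action produces the same joint action $a_{k+1}$ whether applied to $(\bar R^i(\cdot,\hat\mu^i_k))_{i}$ or to $(R^i(\cdot,\hat\pi^{-i}_k))_{i}$.
   Context: Setting: $\mathcal{G}$ is an $N$-player game that is polymatrix ($r^i(a^i,a^{-i})=\sum_{j\neq i}r^{ij}(a^i,a^j)$) and anonymous (common action set $\mathbb{A}$ with $|\mathbb{A}|=n$, rewards invariant under permutations of $a^{-i}$). $\bar r^i:\mathbb{A}\times\mathbb{X}\to\mathbb{R}$ satisfies $r^i(a^i,a^{-i})=\bar r^i(a^i,\sigma(a^{-i}))$, where $\sigma(a^{-i})=\sum_{j\ne i}\mathds{1}\{a^j\}$ and $\mathbb{X}=\{\xi\in\mathbb{N}^n:\sum_l\xi_l=N-1\}$. Given step sizes $(\alpha_k)_{k\ge1}$ and a joint action sequence $(a_l)$: $\hat\pi^j_0=\mathds{1}\{a^j_0\}$, $\hat\pi^j_k=\hat\pi^j_{k-1}+\alpha_k(\mathds{1}\{a^j_k\}-\hat\pi^j_{k-1})$; $\hat\mu^i_0=\mathds{1}\{\sigma(a^{-i}_0)\}$,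 $\hat\mu^i_k=\hat\mu^i_{k-1}+\alpha_k(\mathds{1}\{\sigma(a^{-i}_k)\}-\hat\mu^i_{k-1})$. $R^i(a^i,\pi^{-i})=\sum_{a^{-i}}r^i(a^i,a^{-i})\prod_{j\ne i}\pi^j(a^j)$, $\bar R^i(a^i,\mu)=\sum_{x\in\mathbb{X}}\bar r^i(a^i,x)\mu(x)$. *)

(* Defs.v *)
From mathcomp Require Import all_boot all_order all_algebra all_fingroup.
Set Implicit Arguments. Unset Strict Implicit. Unset Printing Implicit Defensive.
Import Order.TTheory GRing.Theory Num.Theory.
Local Open Scope ring_scope.

Section Game.
Variables (R : realFieldType) (A : finType) (N : nat).

Definition profile := {ffun 'I_N -> A}.

(* count vectors xi in N^n; entries are at most N, so they live in 'I_N.+1 *)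
Definition cnt := {ffun A -> 'I_N.+1}.

Definition Xset : {set cnt} := [set x : cnt | (\sum_(b : A) (x b : nat) == N.-1)%N].

Definition sigma (i : 'I_N) (a : profile) : cnt :=
  [ffun b => inord #|[set j : 'I_N | (j != i) && (a j == b)]|].

Definition polymatrix (r : 'I_N -> profile -> R) : Prop :=
  exists rij : 'I_N -> 'I_N -> A -> A -> R,
    forall i (a : profile), r i a = \sum_(j < N | j != i) rij i j (a i) (a j).

Definition anonymous (r : 'I_N -> profile -> R) : Prop :=
  forall i (s : {perm 'I_N}) (a : profile), s i = i ->
    r i [ffun j => a (s j)] = r i a.

Fixpoint pi_hat (alpha : nat -> R) (acts : nat -> profile) (j : 'I_N) (k : nat)
  : A -> R :=
  match k with
  | 0 => fun b => (acts 0%N j == b)%:R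
  | k'.+1 => fun b => pi_hat alpha acts j k' b
       + alpha k * ((acts k j == b)%:R - pi_hat alpha acts j k' b)
  end.

Fixpoint mu_hat (alpha : nat -> R) (acts : nat -> profile) (i : 'I_N) (k : nat)
  : cnt -> R :=
  match k with
  | 0 => fun x => (sigma i (acts 0%N) == x)%:R
  | k'.+1 => fun x => mu_hat alpha acts i k' x
       + alpha k * ((sigma i (acts k) == x)%:R - mu_hat alpha acts i k' x)
  end.

Definition Rexp (r : 'I_N -> profile -> R) (i : 'I_N) (ai : A)
  (pi : 'I_N -> A -> R) : R :=
  \sum_(a : profile | a i == ai) r i a * \prod_(j < N | j != i) pi j (a j).

Definition Rbar (rbar : 'I_N -> A -> cnt -> R) (i : 'I_N) (ai : A)
  (mu : cnt -> R) : R :=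
  \sum_(x in Xset) rbar i ai x * mu x.

Definition argmaxes (f : A -> R) : {set A} := [set a | [forall b, f b <= f a]].

End Game.

(* Main.v *)
Require Import Defs.
From mathcomp Require Import all_boot all_order all_algebra all_fingroup.
From mathcomp Require Import ring.
Import Order.TTheory GRing.Theory Num.Theory.
Local Open Scope ring_scope.
Set Implicit Arguments.

Section S.
Variables (R : realFieldType) (A : finType) (N : nat).

Lemma lin_sum (T : finType) (P : pred T) (a : R) (p q : T -> R) :
  \sum_(x | P x) (p x + a * (q x - p x)) =
  \sum_(x | P x) p x + a * (\sum_(x | P x) q x - \sum_(x | P x) p x).
Proof.
rewrite -sumrB mulr_sumr -big_split /=; apply: eq_bigr => x _; ring.
Qed.

Lemma lin_sumf (T : finType) (P : pred T) (a : R) (f p q : T -> R) :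
  \sum_(x | P x) f x * (p x + a * (q x - p x)) =
  \sum_(x | P x) f x * p x + a * (\sum_(x | P x) f x * q x - \sum_(x | P x) f x * p x).
Proof.
rewrite -lin_sum; apply: eq_bigr => x _; ring.
Qed.

Lemma delta_sum (f : A -> R) c : \sum_b f b * (c == b)%:R = f c.
Proof.
rewrite (bigD1 c) //= eqxx mulr1 big1 ?addr0 // => b /negbTE.
by rewrite eq_sym => ->; rewrite mulr0.
Qed.

Lemma sigma_in (i : 'I_N) (a : profile A N) : sigma i a \in Xset A N.
Proof.
rewrite inE; apply/eqP.
have H b : (#|[set j : 'I_N | (j != i) && (a j == b)]| = \sum_(j | j != i) (a j == b))%N.
  rewrite -sum1_card big_mkcond [RHS]big_mkcond /=; apply: eq_bigr => j _.
  by rewrite inE; case: (j != i); case: (a j == b).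
transitivity (\sum_(b : A) \sum_(j | j != i) (a j == b : nat))%N.
  apply: eq_bigr => b _; rewrite ffunE inordK; first exact: H.
  rewrite ltnS; apply: (leq_trans (subset_leq_card (subsetT _))).
  by rewrite cardsT card_ord.
rewrite exchange_big /=.
transitivity (\sum_(j < N | j != i) 1)%N.
  apply: eq_bigr => j _; rewrite (bigD1 (a j)) //= eqxx big1 //.
  by move=> b /negbTE; rewrite eq_sym => ->.
rewrite sum1_card cardC1 card_ord //.
Qed.

Lemma sum_pi (alpha : nat -> R) (acts : nat -> profile A N) (j : 'I_N) k : \sum_b pi_hat alpha acts j k b = 1.
Proof.
elim: k => [|k IH] /=.
  by rewrite (bigD1 (acts 0%N j)) //= eqxx big1 ?addr0 // => b /negbTE; rewrite eq_sym => ->.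
rewrite lin_sum IH (bigD1 (acts k.+1 j)) //= eqxx big1 ?addr0 ?subrr ?mulr0 ?addr0 //.
by move=> b /negbTE; rewrite eq_sym => ->.
Qed.


Lemma marginal (i j : 'I_N) (ai : A) (g : A -> R) (pi : 'I_N -> A -> R) :
  j != i -> (forall l, \sum_b pi l b = 1) ->
  \sum_(a : profile A N | a i == ai) g (a j) * \prod_(l < N | l != i) pi l (a l)
  = \sum_b g b * pi j b.
Proof.
move=> ji hs.
pose G l b := if l == i then (b == ai)%:R else if l == j then g b * pi l b else pi l b.
transitivity (\sum_(a : profile A N) \prod_l G l (a l)).
  rewrite big_mkcond /=; apply: eq_bigr => a _.
  rewrite [in RHS](bigD1 i) //= {1}/G eqxx.
  case: eqP => [_|_]; last by rewrite /= mul0r.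
  rewrite mul1r (bigD1 j) //= [in RHS](bigD1 j) ?ji //= /G (negbTE ji) eqxx.
  rewrite mulrA; congr (_ * _); apply: eq_bigr => l /andP [li lj].
  by rewrite (negbTE li) (negbTE lj).
rewrite -bigA_distr_bigA /= (bigD1 i) //= /G eqxx.
have -> : \sum_b (b == ai)%:R = 1 :> R.
  by rewrite (bigD1 ai) //= eqxx big1 ?addr0 // => b /negbTE ->.
rewrite mul1r (bigD1 j) //= (negbTE ji) eqxx [X in _ * X]big1 ?mulr1 //.
move=> l /andP [li lj]; rewrite (negbTE li) (negbTE lj); exact: hs.
Qed.

Lemma Rexp_lin (r : 'I_N -> profile A N -> R) rij (i : 'I_N) (ai : A) (pi : 'I_N -> A -> R) :
  (forall i (a : profile A N), r i a = \sum_(j < N | j != i) rij i j (a i) (a j)) ->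
  (forall l, \sum_b pi l b = 1) ->
  Rexp r i ai pi = \sum_(j < N | j != i) \sum_b rij i j ai b * pi j b.
Proof.
move=> hr hs; rewrite /Rexp.
transitivity (\sum_(a : profile A N | a i == ai) \sum_(j < N | j != i)
   rij i j ai (a j) * \prod_(l < N | l != i) pi l (a l)).
  apply: eq_bigr => a /eqP <-; rewrite hr mulr_suml //.
rewrite exchange_big /=; apply: eq_bigr => j ji.
exact: (marginal i j ai (rij i j ai) pi ji hs).
Qed.


Lemma delta_X (f : cnt A N -> R) (i : 'I_N) (a : profile A N) :
  \sum_(x in Xset A N) f x * (sigma i a == x)%:R = f (sigma i a).
Proof.
rewrite (bigD1 (sigma i a)) ?sigma_in //= eqxx mulr1 big1 ?addr0 //.
by move=> x /andP [_ /negbTE]; rewrite eq_sym => ->; rewrite mulr0.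
Qed.

Lemma sigma_upd (i : 'I_N) (ai : A) (a : profile A N) :
  sigma i [ffun l => if l == i then ai else a l] = sigma i a.
Proof.
apply/ffunP => b; rewrite !ffunE; congr inord; apply: eq_card => j.
rewrite !inE ffunE; case: (j =P i) => //=.
Qed.

Lemma main_eq (r : 'I_N -> profile A N -> R) (rbar : 'I_N -> A -> cnt A N -> R)
  rij (alpha : nat -> R) (acts : nat -> profile A N) (i : 'I_N) (ai : A) k :
  (forall i (a : profile A N), r i a = \sum_(j < N | j != i) rij i j (a i) (a j)) ->
  (forall i (a : profile A N), r i a = rbar i (a i) (sigma i a)) ->
  Rbar rbar i ai (mu_hat alpha acts i k)
  = \sum_(j < N | j != i) \sum_b rij i j ai b * pi_hat alpha acts j k b.
Proof.
move=> hr hb.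
have key m : rbar i ai (sigma i (acts m)) = \sum_(j < N | j != i) rij i j ai (acts m j).
  pose a' : profile A N := [ffun l => if l == i then ai else acts m l].
  have := hb i a'; rewrite hr sigma_upd /a' ffunE eqxx => <-.
  apply: eq_bigr => j ji; rewrite ffunE (negbTE ji) //.
rewrite /Rbar; elim: k => [|k IH] /=.
  rewrite delta_X key; apply: eq_bigr => j _; by rewrite delta_sum.
rewrite lin_sumf delta_X IH key.
under eq_bigr => j _ do rewrite lin_sumf delta_sum.
by rewrite lin_sum.
Qed.

End S.

Theorem corollary1 (R : realFieldType) (A : finType) (N : nat)
  (r : 'I_N -> profile A N -> R) (rbar : 'I_N -> A -> cnt A N -> R)
  (alpha : nat -> R) (acts : nat -> profile A N) :
  polymatrix r -> anonymous r ->
  (forall i (a : profile A N), r i a = rbar i (a i) (sigma i a)) ->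
  forall k : nat,
    (forall i : 'I_N,
       argmaxes (fun ai => Rbar rbar i ai (mu_hat alpha acts i k))
       = argmaxes (fun ai => Rexp r i ai (pi_hat alpha acts ^~ k)))
    /\
    (forall rule : 'I_N -> {ffun A -> R} -> A,
       [ffun i => rule i [ffun ai => Rbar rbar i ai (mu_hat alpha acts i k)]]
       = [ffun i => rule i [ffun ai => Rexp r i ai (pi_hat alpha acts ^~ k)]]).
Proof.
move=> [rij hr] _ hb k.
have E i ai : Rbar rbar i ai (mu_hat alpha acts i k) = Rexp r i ai (pi_hat alpha acts ^~ k).
  rewrite (main_eq r rbar rij alpha acts i ai k hr hb) (Rexp_lin r rij i ai _ hr) //.
  by move=> l; apply: sum_pi.
split.
  move=> i; rewrite /argmaxes; apply/setP => a; rewrite !inE; by under eq_forallb => b do rewrite !E.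
move=> rule; apply/ffunP => i; rewrite !ffunE; congr rule.
by apply/ffunP => ai; rewrite !ffunE E.
Qed.
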